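(* Let $\mathcal{K}$ be a convex cone in $\mathbb{R}^d$ and $F$ a Legendre function with domain $\mathcal{K}$. Let $\Pi^\dagger_{\mathrm{all}}=\mathcal{K}^{\mathcal{X}}$ and $\pi_0\in\Pi^\dagger_{\mathrm{all}}$. Suppose that for any $p,q\in\mathcal{K}$ and weights $\lambda_1,\lambda_2>0$, the point $c^*$ defined by $\nabla F(c^* )=\frac{\lambda_1\nabla F(p)+\lambda_2\nabla F(q)}{\lambda_1+\lambda_2}$ lies in $\mathcal{K}$. Then the minimizer $\overline\pi$ of $\pi\mapsto\mathbb{E}_{x\sim\mathcal{D}_{\mathcal{X}}}[\mathsf{B}_F(\pi(x)\parallel\pi_0(x))]$ over the linear subspace $\mathcal{C}^{\dagger\dagger}_{\mathrm{coh}}$ lies in $\mathcal{C}^\dagger_{\mathrm{coh}}=\mathcal{C}^{\dagger\dagger}_{\mathrm{coh}}\cap\Pi^\dagger_{\mathrm{all}}$.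
   Context: $\mathcal{X}$ finite; $\mathcal{D}_{\mathcal{X}}$ a full-support distribution on $\mathcal{X}$; $\Phi\colon\mathcal{X}\to\mathcal{X}$ an involution; $\mathcal{C}^{\dagger\dagger}_{\mathrm{coh}}=\{\pi\colon\mathcal{X}\to\mathbb{R}^d:\pi(x)=\pi(\Phi(x))\ \forall x\}$. $\mathsf{B}_F(p\parallel q)=F(p)-F(q)-\langle\nabla F(q),p-q\rangle$. A Legendre function is proper, closed, convex, differentiable on the interior $\Omega$ of its domain, with $\nabla F\colon\Omega\to\mathrm{int}(\mathrm{dom}F^* )$ a bijection. *)

(* Defs.v *)
From HB Require Import structures.
From mathcomp Require Import all_boot all_order all_algebra.
From mathcomp Require Import all_classical all_reals all_analysis.
Set Implicit Arguments. Unset Strict Implicit. Unset Printing Implicit Defensive.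
Import Order.TTheory GRing.Theory Num.Theory.
Import numFieldNormedType.Exports.
Local Open Scope classical_set_scope.
Local Open Scope ring_scope.

Section Defs.
Variables (R : realType) (d : nat).
Notation V := 'rV[R]_d.

Definition inner (p q : V) : R := \sum_(i < d) p 0 i * q 0 i.

Definition convex_cone (K : set V) : Prop :=
  (forall x y, K x -> K y -> K (x + y)) /\
  (forall x (t : R), K x -> 0 < t -> K (t *: x)).

Definition edom (F : V -> \bar R) : set V := [set x | (F x < +oo)%E].

Definition proper_fun (F : V -> \bar R) : Prop :=
  (exists x, (F x < +oo)%E) /\ (forall x, (-oo < F x)%E).

Definition convex_efun (F : V -> \bar R) : Prop :=
  forall (x y : V) (t : R), 0 < t < 1 ->
    (F ((1 - t) *: x + t *: y)%R <= (1 - t)%:E * F x + t%:E * F y)%E.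

(* closed = lower semicontinuous = all sublevel sets closed *)
Definition closed_efun (F : V -> \bar R) : Prop :=
  forall a : R, closed [set x | (F x <= a%:E)%E].

Definition grad (F : V -> \bar R) (x : V) : V :=
  \row_(i < d) ('d (fine \o F) x : V -> R) (delta_mx 0 i).

Definition conj_fun (F : V -> \bar R) (y : V) : \bar R :=
  ereal_sup [set ((inner x y)%:E - F x)%E | x in [set: V]].

Definition Legendre (F : V -> \bar R) : Prop :=
  proper_fun F /\ convex_efun F /\ closed_efun F /\
      (forall x, interior (edom F) x -> differentiable (fine \o F) x) /\
      (forall x, interior (edom F) x -> interior (edom (conj_fun F)) (grad F x)) /\
      (forall x y, interior (edom F) x -> interior (edom F) y ->
          grad F x = grad F y -> x = y) /\
      (forall y, interior (edom (conj_fun F)) y ->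
          exists2 x, interior (edom F) x & grad F x = y).

Definition bregman (F : V -> \bar R) (p q : V) : \bar R :=
  (F p - F q - (inner (grad F q) (p - q)%R)%:E)%E.

End Defs.

(* Main.v *)
Require Import Defs.
From HB Require Import structures.
From mathcomp Require Import all_boot all_order all_algebra.
From mathcomp Require Import all_classical all_reals all_analysis.
From mathcomp Require Import ring lra.
Import Order.TTheory GRing.Theory Num.Theory.
Import numFieldNormedType.Exports.
Local Open Scope classical_set_scope.
Local Open Scope ring_scope.

Section H.
Variables (R : realType) (d : nat).
Notation V := 'rV[R]_d.

Lemma innerDl (u v w : V) : inner (u + v) w = inner u w + inner v w.
Proof. by rewrite /inner -big_split; apply: eq_bigr => i _; rewrite mxE mulrDl. Qed.
Lemma innerZl (a : R) (u w : V) : inner (a *: u) w = a * inner u w.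
Proof. by rewrite /inner mulr_sumr; apply: eq_bigr => i _; rewrite mxE mulrA. Qed.
Lemma innerBr (u v w : V) : inner u (v - w) = inner u v - inner u w.
Proof. by rewrite /inner -sumrB; apply: eq_bigr => i _; rewrite !mxE mulrBr. Qed.

Lemma grad_inner (F : V -> \bar R) c v : inner (grad F c) v = 'd (fine \o F) c v.
Proof.
rewrite [in RHS](row_sum_delta v) linear_sum /inner; apply: eq_bigr => i _.
by rewrite linearZ mxE mulrC.
Qed.


Lemma right_sub (g : R -> R) (l : R) : g @ (0:R)^' --> l -> g @ (0:R)^'+ --> l.
Proof.
move=> H; apply: cvg_trans H; apply: cvg_fmap2 => P.
rewrite /dnbhs /at_right /within /=.
by apply: filterS => y Hy y0; apply: Hy; rewrite gt_eqF.
Qed.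

Lemma grad_ineq (F : V -> \bar R) (c p : V) :
  (forall x, (-oo < F x)%E) -> convex_efun F -> interior (edom F) c ->
  differentiable (fine \o F) c -> (F p < +oo)%E ->
  inner (grad F c) (p - c) <= fine (F p) - fine (F c).
Proof.
move=> Fpr Fcv Hc dif Fp.
have Fc : (F c < +oo)%E := interior_subset Hc.
have [rc Erc] : exists r, F c = r%:E.
  by move: (Fpr c) Fc; case: (F c) => [r|//|//] *; by exists r.
have [rp Erp] : exists r, F p = r%:E.
  by move: (Fpr p) Fp; case: (F p) => [r|//|//] *; by exists r.
rewrite Erc Erp /= grad_inner -deriveE //.
have hd : derivable (fine \o F) c (p - c) := diff_derivable dif.
have hr := @right_sub _ _ hd.
apply: (cvgr_to_le hr).
near=> h.
have h0 : 0 < h by near: h; exact: nbhs_right_gt.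
have h1 : h < 1 by near: h; exact: nbhs_right_lt.
have := Fcv c p h; rewrite h0 h1 => /(_ isT).
have -> : (1 - h) *: c + h *: p = h *: (p - c) + c.
  by rewrite scalerBr scalerBl scale1r addrAC [in RHS]addrC addrA.
rewrite Erc Erp -!EFinM -EFinD.
move: (Fpr (h *: (p - c) + c)).
case E: (F (h *: (p - c) + c)) => [s| |] // _; rewrite ?lee_fin ?leye_eq ?EFinD ?EFinM //= => Hs.
rewrite /= /shift /= E Erc /=.
have hs : s - rc <= h * (rp - rc) by lra.
rewrite -[rp - rc](mulKf (lt0r_neq0 h0)).
by apply: ler_wpM2l => //; rewrite invr_ge0 ltW.
Unshelve. all: by end_near.
Qed.

Lemma innerDr (u v w : V) : inner w (u + v) = inner w u + inner w v.
Proof. by rewrite /inner -big_split; apply: eq_bigr => i _; rewrite mxE mulrDr. Qed.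
Lemma innerZr (a : R) (u w : V) : inner w (a *: u) = a * inner w u.
Proof. by rewrite /inner mulr_sumr; apply: eq_bigr => i _; rewrite mxE mulrCA. Qed.

Lemma int_conv (S : set V) (a b : V) (t : R) :
  (forall u v, S u -> S v -> S ((1 - t) *: u + t *: v)) ->
  S° a -> S° b -> S° ((1 - t) *: a + t *: b).
Proof.
move=> HS /nbhs_ballP [ea ea0 Ha] /nbhs_ballP [eb eb0 Hb].
apply/nbhs_ballP; exists (Num.min ea eb).
  by rewrite /=; case: (ltP ea eb) => _.
move=> w; rewrite -ball_normE /ball_ /= => Hw.
have wa : `|(1 - t) *: a + t *: b - w| < ea by apply: lt_le_trans Hw _; rewrite ge_min lexx.
have wb : `|(1 - t) *: a + t *: b - w| < eb by apply: lt_le_trans Hw _; rewrite ge_min lexx orbT.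
set z := (1 - t) *: a + t *: b.
have -> : w = (1 - t) *: (a + (w - z)) + t *: (b + (w - z)).
  rewrite [_ *: (a + _)]scalerDr [_ *: (b + _)]scalerDr addrACA -/z -scalerDl subrK scale1r.
  by rewrite addrC subrK.
apply: HS.
  by apply: Ha; rewrite -ball_normE /ball_ /= opprD addrA subrr sub0r normrN distrC.
by apply: Hb; rewrite -ball_normE /ball_ /= opprD addrA subrr sub0r normrN distrC.
Qed.

Lemma conj_bound (F : V -> \bar R) a :
  (conj_fun F a < +oo)%E -> exists r, (conj_fun F a <= r%:E)%E.
Proof.
case: (conj_fun F a) => [r _|//|_]; first by exists r.
by exists 0; rewrite leNye.
Qed.

Lemma conj_dom_convex (F : V -> \bar R) (a b : V) (t : R) :
  (forall x, (-oo < F x)%E) -> 0 <= t <= 1 ->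
  (conj_fun F a < +oo)%E -> (conj_fun F b < +oo)%E ->
  (conj_fun F ((1 - t) *: a + t *: b) < +oo)%E.
Proof.
move=> Fpr /andP [t0 t1] /conj_bound [ra Ha] /conj_bound [rb Hb].
apply: (@le_lt_trans _ _ ((1 - t) * ra + t * rb)%:E); last by rewrite ltry.
apply: ge_ereal_sup => _ [x _ <-].
have ha : ((inner x a)%:E - F x <= ra%:E)%E.
  by apply: le_trans Ha; apply: ereal_sup_ubound; exists x.
have hb : ((inner x b)%:E - F x <= rb%:E)%E.
  by apply: le_trans Hb; apply: ereal_sup_ubound; exists x.
move: (Fpr x) ha hb; case: (F x) => [r| |] //= _.
rewrite -!EFinD !lee_fin innerDr !innerZr => ha hb.
have h1 : 0 <= 1 - t by rewrite subr_ge0.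
have := ler_wpM2l h1 ha; have := ler_wpM2l t0 hb.
move=> p1 p2; lra.
by move=> *; rewrite addeNy leNye.
Qed.

Definition bR (F : V -> \bar R) (p q : V) : R :=
  fine (F p) - fine (F q) - inner (grad F q) (p - q).

Lemma fin_of (F : V -> \bar R) p :
  (forall x, (-oo < F x)%E) -> (F p < +oo)%E -> F p = (fine (F p))%:E.
Proof. by move=> Fpr; move: (Fpr p); case: (F p). Qed.
Arguments fin_of {F p}.

Lemma breg_fin (F : V -> \bar R) p q :
  (forall x, (-oo < F x)%E) -> (F p < +oo)%E -> (F q < +oo)%E ->
  bregman F p q = (bR F p q)%:E.
Proof.
move=> Fpr Fp Fq; rewrite /bregman /bR (fin_of Fpr Fp) (fin_of Fpr Fq).
by rewrite /= !EFinB.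
Qed.

Lemma breg_inf (F : V -> \bar R) p q :
  (forall x, (-oo < F x)%E) -> F p = +oo%E -> (F q < +oo)%E ->
  bregman F p q = +oo%E.
Proof.
move=> Fpr Fp Fq; rewrite /bregman Fp (fin_of Fpr Fq) /=.
by [].
Qed.

Lemma breg_nNy (F : V -> \bar R) p q :
  (forall x, (-oo < F x)%E) -> (F q < +oo)%E -> bregman F p q != -oo%E.
Proof.
move=> Fpr Fq; rewrite /bregman (fin_of Fpr Fq).
by move: (Fpr p); case: (F p).
Qed.
Lemma avg_conv (a b : R) (u v : V) : a + b != 0 ->
  (a + b)^-1 *: (a *: u + b *: v) = (1 - b / (a + b)) *: u + (b / (a + b)) *: v.
Proof.
move=> s0; rewrite scalerDr !scalerA; congr (_ *: _ + _ *: _); last by rewrite mulrC.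
by rewrite -[X in X - _](mulfV s0) -mulrBl mulrC addrK.
Qed.

Lemma avg_sym (a b : R) (u v : V) :
  (b + a)^-1 *: (b *: v + a *: u) = (a + b)^-1 *: (a *: u + b *: v).
Proof. by rewrite addrC (addrC (b *: v)). Qed.

Lemma pair_ineq (a b fp fc fqx fqy : R) (gx gy p cc qx qy : V) :
  0 < a + b ->
  inner ((a + b)^-1 *: (a *: gx + b *: gy)) (p - cc) <= fp - fc ->
  0 <= (a * (fp - fqx - inner gx (p - qx)) - a * (fc - fqx - inner gx (cc - qx)))
     + (b * (fp - fqy - inner gy (p - qy)) - b * (fc - fqy - inner gy (cc - qy))).
Proof.
move=> s0; rewrite innerZl innerDl !innerZl => H.
have := ler_wpM2l (ltW s0) H; rewrite mulrA mulfV ?mul1r ?gt_eqF //.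
rewrite !innerBr => H2.
lra.
Qed.

Lemma grad_ineq' (F : V -> \bar R) (c p w : V) :
  (forall x, (-oo < F x)%E) -> convex_efun F -> interior (edom F) c ->
  differentiable (fine \o F) c -> (F p < +oo)%E -> grad F c = w ->
  inner w (p - c) <= fine (F p) - fine (F c).
Proof. by move=> ? ? ? ? ? <-; exact: grad_ineq. Qed.
End H.
Arguments grad_ineq' {R d F c p w}.
Arguments pair_ineq {R d a b fp fc fqx fqy gx gy p cc qx qy}.
Arguments bR {R d}.
Arguments breg_fin {R d F p q}.
Arguments breg_inf {R d F p q}.
Arguments breg_nNy {R d F} p {q}.
Arguments grad_ineq {R d F c p}.
Arguments int_conv {R d S a b t}.
Arguments conj_dom_convex {R d F a b t}.
Arguments avg_conv {R d a b u v}.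
Arguments avg_sym {R d a b u v}.

Theorem theorem12 (R : realType) (d : nat) (X : finType)
  (D : X -> R) (Phi : X -> X)
  (K : set 'rV[R]_d) (F : 'rV[R]_d -> \bar R) (pi0 : X -> 'rV[R]_d) :
  (forall x, 0 < D x) -> \sum_(x : X) D x = 1 ->
  (forall x, Phi (Phi x) = x) ->
  convex_cone K -> Legendre F -> edom F = K ->
  (forall x, K (pi0 x)) ->
  (forall x, interior (edom F) (pi0 x)) ->
  (forall (p q : 'rV[R]_d) (l1 l2 : R), K p -> K q -> 0 < l1 -> 0 < l2 ->
     forall c, interior (edom F) c ->
       grad F c = (l1 + l2)^-1 *: (l1 *: grad F p + l2 *: grad F q) -> K c) ->
  let Ccoh2 := [set pi : X -> 'rV[R]_d | forall x, pi x = pi (Phi x)] in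
  let Pall := [set pi : X -> 'rV[R]_d | forall x, K (pi x)] in
  let J := fun pi : X -> 'rV[R]_d =>
     (\sum_(x : X) (D x)%:E * bregman F (pi x) (pi0 x))%E in
  let is_min := fun pib => Ccoh2 pib /\ forall pi, Ccoh2 pi -> (J pib <= J pi)%E in
  (exists pib, is_min pib) /\
  (forall pib, is_min pib -> (Ccoh2 `&` Pall) pib).
Proof.
move=> D0 D1 Phi2 cone Leg edomK pi0K pi0int Hyp Ccoh2 Pall J is_min.
case: Leg => [[_ Fpr] [Fcv [_ [Fdif [Fgrad [Finj Fsurj]]]]]].
set g := fun x => grad F (pi0 x).
set avg := fun x => (D x + D (Phi x))^-1 *: (D x *: g x + D (Phi x) *: g (Phi x)).
have sD x : 0 < D x + D (Phi x) by rewrite addr_gt0.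
have Havg x : interior (edom (conj_fun F)) (avg x).
  set s := D x + D (Phi x); set t := D (Phi x) / s.
  have s0 : s != 0 := lt0r_neq0 (sD x).
  have -> : avg x = (1 - t) *: g x + t *: g (Phi x) by rewrite /avg avg_conv.
  have t0 : 0 <= t := divr_ge0 (ltW (D0 _)) (ltW (sD x)).
  have t1 : t <= 1.
    rewrite /t ler_pdivrMr ?sD // mul1r /s; have := D0 x; lra.
  apply: int_conv; [|exact: Fgrad _ (pi0int x)|exact: Fgrad _ (pi0int (Phi x))].
  by move=> u v Hu Hv; apply: conj_dom_convex => //; rewrite t0 t1.
have [c cint cgrad] : exists2 c : X -> 'rV[R]_d,
    (forall x, interior (edom F) (c x)) & (forall x, grad F (c x) = avg x).
  have cP : forall x, {c | interior (edom F) c & grad F c = avg x}.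
    by move=> x; apply: cid2; apply: Fsurj; exact: Havg.
  by exists (fun x => s2val (cP x)) => x; [exact: (s2valP (cP x)) | exact: (s2valP' (cP x))].
have avgPhi x : avg (Phi x) = avg x.
  by rewrite /avg Phi2; apply: avg_sym.
have ccoh x : c x = c (Phi x).
  apply: (Finj (c x) (c (Phi x)) (cint x) (cint (Phi x))).
  exact: (etrans (cgrad x) (etrans (esym (avgPhi x)) (esym (cgrad (Phi x))))).
have cfin x : (F (c x) < +oo)%E := interior_subset (cint x).
have q_fin x : (F (pi0 x) < +oo)%E := interior_subset (pi0int x).
have Jfin pi : (forall x, F (pi x) < +oo)%E ->
    J pi = (\sum_x D x * bR F (pi x) (pi0 x))%:E.
  move=> H; rewrite /J -sumEFin; apply: eq_bigr => x _.
  by rewrite (breg_fin Fpr (H x) (q_fin x)).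
have Jinf pi x0 : F (pi x0) = +oo%E -> J pi = +oo%E.
  move=> H; rewrite /J (bigD1 x0) //= (breg_inf Fpr H (q_fin x0)) gt0_muley ?lte_fin //.
  rewrite addye //.
  apply: (big_ind (fun y => y != -oo%E)) => //.
    by move=> a b; rewrite adde_eq_ninfty negb_or => -> ->.
  move=> i _; move: (breg_nNy (pi i) Fpr (q_fin i)).
  case: (bregman F (pi i) (pi0 i)) => [r _|_|//]; first by [].
  by rewrite gt0_muley ?lte_fin.
have Jc := Jfin c cfin.
have Ccohc : Ccoh2 c := ccoh.
have key pi : Ccoh2 pi -> (J c <= J pi)%E.
  move=> Hpi.
  have [Hall|] := pselect (forall x, F (pi x) < +oo)%E; last first.
    move/existsNP => [x0 /negP]; rewrite ltey negbK => /eqP H.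
    by rewrite (Jinf pi x0 H) leey.
  rewrite Jc (Jfin pi Hall) lee_fin -subr_ge0 -sumrB.
  pose h := fun x => D x * bR F (pi x) (pi0 x) - D x * bR F (c x) (pi0 x).
  have pair x : 0 <= h x + h (Phi x).
    rewrite /h -(ccoh x) -(Hpi x).
    have gi := grad_ineq' Fpr Fcv (cint x) (Fdif _ (cint x)) (Hall x) (cgrad x).
    exact: (pair_ineq (sD x) gi).
  have E : \sum_x h x = \sum_x h (Phi x) by rewrite (reindex_inj (can_inj Phi2)).
  have : 0 <= \sum_x h x + \sum_x h x.
    by rewrite {2}E -big_split; apply: sumr_ge0 => x _; exact: pair.
  move=> H2; have H3 : 0 <= \sum_x h x by lra.
  exact: H3.
split.
  by exists c; split => //; exact: key.
move=> pib [Hcoh Hmin]; split => // x.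
rewrite -edomK /edom /= ltey; apply/negP => /eqP H.
by have := Hmin c Ccohc; rewrite (Jinf _ _ H) Jc leye_eq.
Qed.
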